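(* Let $m\geq1$ and let $\Delta$ be the triangle with vertices $(-\alpha,0)$, $(m-1+\beta,0)$, $(m,m+1)$, where $\alpha,\beta$ are rational with $0<\alpha<\frac{1}{1+(m+1)+(m+1)^2}$ and $\frac{1}{m+2}<\beta<1-\frac{1}{1+\frac{1}{m+1}+\frac{1}{(m+1)^2}-\frac{\alpha}{1-(m+2)\alpha}}$. With $C$, $D$ and $HC_k$ as in the context, $m\notin HC_k$.
   Context: Let $k$ be an algebraically closed field of characteristic zero, $t_0=(1,1)$. For a rational triangle $\Delta$, $X_\Delta$ is the projective toric surface defined by $\Delta$ (containing the torus $T$ with coordinates $x,y$), $\pi:X=\mathrm{Bl}_{t_0}X_\Delta\to X_\Delta$ the blowup with exceptional curve $E$. Divisor classes on $X_\Delta$ correspond to rational triangles with sides parallel to those of $\Delta$ (each side's line containing a lattice point), up to integral translation, and global sections of the corresponding sheaf are Laurent polynomials with Newton polygon in that triangle. $\xi_m\in\mathbb{Z}[x,y]$ is the polynomial $(-1)^mx^my^{m+1}+\sum_{j=0}^{m-1}\sum_{i=j}^{m-1}(-1)^j\binom{m+1}{j}x^iy^j$. $C\subset X$ is the strict transform of $\{\xi_m=0\}$. $D$ is the class $\pi^*H'-(m+1)E$, where $H'$ corresponds to the triangle with sides parallel to those of $\Delta$ and base the interval $[0,m]$ on the $x$-axis. For a global section $s$ of $\mathcal{O}_X(lD)$ given by a rational function $f$, $V(s)$ is the support of $\mathrm{div}(f)+lD$. $HC_k=\{l\in\mathbb{Z}_{>0}:\mathcal{O}_X(lD)\text{ has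 a global section }\zeta\text{ with }C\cap V(\zeta)=\emptyset\}$. Equivalently, $l\in HC_k$ iff there is a Laurent polynomial $\zeta\in k[x^{\pm1},y^{\pm1}]$ whose Newton polygon lies in the triangle with sides parallel to those of $\Delta$ and base $[0,lm]$ on the $x$-axis, vanishing to order $l(m+1)$ at $t_0$, with nonzero constant term. *)

(* Defs.v *)
From HB Require Import structures.
From mathcomp Require Import all_boot all_order all_algebra.
From mathcomp Require Import mpoly.
Set Implicit Arguments. Unset Strict Implicit. Unset Printing Implicit Defensive.
Import Order.TTheory GRing.Theory Num.Theory.
Local Open Scope ring_scope.

Definition x0 : 'I_2 := ord0.
Definition y1 : 'I_2 := ord_max.

Definition shift_t0 (k : comRingType) : 2.-tuple {mpoly k[2]} :=
  [tuple ('X_x0 + 1); ('X_y1 + 1)].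

(* p vanishes to order at least N at t0 = (1,1): its Taylor expansion at (1,1)
   has no monomial of total degree < N. *)
Definition vanishes_at_t0 (k : comRingType) (p : {mpoly k[2]}) (N : nat) : Prop :=
  forall mo, mo \in msupp (comp_mpoly (shift_t0 k) p) -> (N <= mdeg mo)%N.

(* The lattice point (i, j) lies in the (closed) triangle with sides parallel to those
   of Delta = conv{(-a,0), (m-1+b,0), (m,m+1)} and base [0, L] on the x-axis:
   j >= 0, on the right of the line through (0,0) with direction (m+a, m+1),
   on the left of the line through (L,0) with direction (1-b, m+1). *)
Definition in_triangle (m : nat) (a b : rat) (L : nat) (i j : nat) : bool :=
  [&& 0 <= (j%:R : rat),
      0 <= (m.+1)%:R * i%:R - (m%:R + a) * j%:R
    & 0 <= (m.+1)%:R * (L%:R - i%:R) + (1 - b) * j%:R].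

Definition newton_in_triangle (k : comRingType) (m : nat) (a b : rat) (L : nat)
    (p : {mpoly k[2]}) : Prop :=
  forall mo, mo \in msupp p -> in_triangle m a b L (mo x0) (mo y1).

(* l \in HC_k, via the equivalent description given in the context. *)
Definition HC (k : comRingType) (m : nat) (a b : rat) (l : nat) : Prop :=
  (0 < l)%N /\
  exists zeta : {mpoly k[2]},
    [/\ newton_in_triangle m a b (l * m) zeta,
        vanishes_at_t0 zeta (l * m.+1)
      & zeta@_(0%MM) != 0].

(* Main.v *)
Require Import Defs.
From HB Require Import structures.
From mathcomp Require Import all_boot all_order all_algebra.
From mathcomp Require Import mpoly.
From mathcomp Require Import zify ring lra.
Import Order.TTheory GRing.Theory Num.Theory.
Local Open Scope ring_scope.

Lemma tri_rat (M I J a b : rat) : 1 <= M -> 0 < a -> 1 < b * (M + 2) -> 0 <= J ->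
  0 <= (M + 1) * I - (M + a) * J -> 0 <= (M + 1) * (M * M - I) + (1 - b) * J ->
  M * M + M <= I -> (M + 2) * (I - M * M) < J /\ M * J < (M + 1) * I.
Proof.
move=> hM ha hb hJ h1 h2 hI.
have hJ0 : 0 < J.
  rewrite lt_def hJ andbT; apply/eqP=> J0; move: h2; rewrite J0 mulr0 addr0.
  nra.
have hbj : 0 < (b * (M + 2) - 1) * J by apply: mulr_gt0; lra.
have haj : 0 < a * J by apply: mulr_gt0.
split; nra.
Qed.

Lemma tri_nat (m : nat) (a b : rat) i j : (1 <= m)%N -> 0 < a -> 1 / (m.+2)%:R < b ->
  in_triangle m a b (m * m) i j -> (i < m * m.+1)%N /\ (i = 0%N -> j = 0%N).
Proof.
move=> hm ha hb /and3P [hJ h1 h2].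
have hb' : 1 < b * (m%:R + 2).
  have hp : (0 : rat) < (m.+2)%:R by rewrite ltr0n.
  move: hb; rewrite ltr_pdivrMr // !mulrSr; lra.
have hM : (1 : rat) <= m%:R by rewrite ler1n.
rewrite !mulrSr in h1 h2 *; rewrite natrM in h2.
split.
  rewrite ltnNge; apply/negP => hi.
  have hI : m%:R * m%:R + m%:R <= (i%:R : rat).
    by rewrite -natrM -natrD ler_nat; move: hi; rewrite mulnS; lia.
  have [e1 e2] := @tri_rat m%:R i%:R j%:R a b hM ha hb' hJ h1 h2 hI.
  have n1 : ((m.+2 * (i - m * m)) < j)%N.
    rewrite -(ltr_nat rat) natrM natrB; last by lia.
    by rewrite natrM !mulrSr; lra.
  have n2 : (m * j < m.+1 * i)%N.
    by rewrite -(ltr_nat rat) !natrM !mulrSr.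
  nia.
move=> i0; move: h1; rewrite i0 mulr0 sub0r oppr_ge0 => h1.
apply/eqP; rewrite -(eqr_nat rat); apply/eqP.
apply/le_anti; rewrite hJ andbT.
rewrite leNgt; apply/negP => hj.
have : 0 < (m%:R + a) * (j%:R : rat) by apply: mulr_gt0 => //; lra.
lra.
Qed.
Lemma mmap_comp (R S : comNzRingType) (f : {rmorphism R -> S}) (h : 'I_2 -> S)
   (p : {mpoly R[2]}) (lq : 2.-tuple {mpoly R[2]}) :
  mmap f h (p \mPo lq) = mmap f (fun i => mmap f h (tnth lq i)) p.
Proof.
rewrite comp_mpolyEX raddf_sum /= [RHS]/mmap.
apply: eq_bigr => mo _.
rewrite mmapZ comp_mpolyX rmorph_prod /= /mmap1.
congr (_ * _); apply: eq_bigr => i _; by rewrite rmorphXn.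
Qed.

Lemma prod2 (R : comNzRingType) (F : 'I_2 -> R) :
  \prod_(i < 2) F i = F ord0 * F ord_max.
Proof.
rewrite big_ord_recr big_ord_recr big_ord0 /= mul1r; congr (F _ * F _); exact: val_inj.
Qed.

Lemma mmap_ext (R S : comNzRingType) (f : R -> S) (h h' : 'I_2 -> S) (p : {mpoly R[2]}) :
  h =1 h' -> mmap f h p = mmap f h' p.
Proof. by move=> e; rewrite /mmap; apply: eq_bigr => mo _; rewrite (mmap1_eq _ e). Qed.

Lemma mdeg2 (mo : 'X_{1..2}) : mdeg mo = (mo x0 + mo y1)%N.
Proof.
rewrite mdegE big_ord_recr big_ord_recr big_ord0 /=; congr (_ + mo _ + mo _)%N; exact: val_inj.
Qed.

Theorem lemma5p7 (k : closedFieldType) (hk : [pchar k] =i pred0)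
    (m : nat) (a b : rat) (hm : (1 <= m)%N)
    (ha0 : 0 < a) (ha1 : a < 1 / (1 + (m.+1)%:R + (m.+1)%:R ^+ 2))
    (hb0 : 1 / (m.+2)%:R < b)
    (hb1 : b < 1 - 1 / (1 + 1 / (m.+1)%:R + 1 / (m.+1)%:R ^+ 2
                          - a / (1 - (m.+2)%:R * a))) :
  ~ HC k m a b m.
Proof.
move=> [_ [zeta [hNT hV hc0]]].
have htri : forall mo, mo \in msupp zeta ->
    (mo x0 < m * m.+1)%N /\ (mo x0 = 0%N -> mo y1 = 0%N).
  by move=> mo /hNT; apply: tri_nat.
set N := (m * m.+1)%N in hV htri.
pose h2 : 'I_2 -> {poly k} := fun i => if i == x0 then 'X else 0.
pose g : 'I_2 -> {poly k} := fun i => if i == x0 then 'X + 1 else 1.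
pose P := mmap (@polyC k) g zeta.
have eP : mmap (@polyC k) h2 (comp_mpoly (shift_t0 k) zeta) = P.
  rewrite mmap_comp /P; apply: mmap_ext => -[[|[|//]] hi] /=.
    rewrite /shift_t0 (tnth_nth 0) /= mmapD mmapX mmap1U mmapC /= /h2 /g /=.
    by [].
  rewrite /shift_t0 (tnth_nth 0) /= mmapD mmapX mmap1U mmapC /= /h2 /g /=.
  by rewrite add0r.
have size_P : (size P <= N)%N.
  rewrite /P /mmap big_seq.
  apply: (big_ind (fun q : {poly k} => (size q <= N)%N)).
  - by rewrite size_poly0.
  - by move=> p q hp hq; apply: leq_trans (size_polyD _ _) _; rewrite geq_max hp hq.
  move=> mo hmo; rewrite mul_polyC; apply: leq_trans (size_scale_leq _ _) _.
  rewrite /mmap1 prod2 /g /= expr1n mulr1.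
  apply: leq_trans (size_poly_exp_leq _ _) _.
  rewrite -polyC1 size_XaddC /= mul1n.
  by have [] := htri mo hmo.
have coefQ : forall i, (i < N)%N ->
    (mmap (@polyC k) h2 (comp_mpoly (shift_t0 k) zeta))`_i = 0.
  move=> i hi; rewrite /mmap coef_sum big_seq big1 // => mo hmo.
  rewrite coefCM /mmap1 prod2 /h2 /=.
  case e: (mo ord_max) => [|n].
    rewrite expr0 mulr1 coefXn.
    have := hV mo hmo; rewrite mdeg2.
    have -> : mo y1 = 0%N by [].
    rewrite addn0 => hd.
    have -> : (i == mo x0) = false by apply/negbTE; rewrite neq_ltn (leq_trans hi hd).
    by rewrite mulr0.
  by rewrite expr0n /= mulr0 coef0 mulr0.
have P0 : P = 0.
  apply/polyP => i; rewrite coef0.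
  case: (ltnP i N) => hi; first by rewrite -eP coefQ.
  by rewrite nth_default // (leq_trans size_P hi).
have : P.[-1] = zeta@_0.
  rewrite [in RHS](mpolyE zeta) raddf_sum /= /P /mmap horner_sum !big_seq.
  apply: eq_bigr => mo hmo.
  rewrite mcoeffZ mcoeffX hornerCM /mmap1 prod2 /g /= expr1n mulr1.
  rewrite horner_exp hornerD hornerX hornerC addNr.
  have [_ h0] := htri mo hmo.
  case e: (mo ord0) => [|n].
    rewrite expr0.
    have -> : mo = 0%MM.
      apply/mnmP => -[[|[|//]] hi]; rewrite mnm0E.
        by have -> : Ordinal hi = ord0 by exact: val_inj.
      have -> : Ordinal hi = y1 by exact: val_inj.
      exact: h0.
    by rewrite eqxx.
  rewrite expr0n /=.
  have -> : (mo == 0%MM) = false.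
    apply/negbTE/eqP => e0; move: e; rewrite e0 mnm0E //.
  by rewrite mulr0.
by rewrite P0 horner0 => /esym/eqP; rewrite (negbTE hc0).
Qed.
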